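(* In the standing setting, assume that the self-adjoint operator $A^N$ in $\overline V$ associated with $\mathfrak a$ has no eigenvector belonging to $V_D=\ker j$. Let $\lambda,\mu\in\mathbb R$. Then $\lambda$ is an eigenvalue (equivalently, lies in the spectrum) of the self-adjoint operator $A_\mu$ in $\overline V$ associated with $\mathfrak a_\mu$ if and only if $\mu\in\sigma(\mathcal N_\lambda)$.
   Context: Standing setting: $V,H,K$ complex Hilbert spaces, $V$ embedded in $H$ with compact inclusion $i\colon V\to H$, $j\colon V\to K$ compact linear, $\mathfrak a$ a positive, symmetric, continuous sesquilinear form on $V$ which is $i$-elliptic ($\mathfrak a(u,u)+\omega\|u\|_H^2\ge\delta\|u\|_V^2$ for some $\omega,\delta>0$). $\mathfrak a_\mu(u,v)=\mathfrak a(u,v)-\mu(j(u),j(v))_K$; the operator $B$ in $\overline W$ associated with a form $\mathfrak c$ on a closed subspace $W\subset V$ is: $u\in D(B)$, $Bu=f$ iff $u\in W$, $f\in\overline W$, $\mathfrak c(u,v)=(f,v)_H$ for all $v\in W$ (these have compact resolvent). $\mathfrak b_\lambda(u,v)=\mathfrak a(u,v)-\lambda(u,v)_H$, and $\mathcal N_\lambda=\{(j(u),\psi)\in K\times K: u\in V,\ \mathfrak b_\lambda(u,v)=(\psi,j(v))_K\ \forall v\in V\}$, a self-adjoint graph in $K$ with compact resolvent; its single-valued part $\mathcal N_\lambda^\circ$ is the self-adjoint operator in $\overline{D(\mathcal N_\lambda)}$ with graph $\mathcal N_\lambda\cap(\overline{D(\mathcal N_\lambda)}\times\overline{D(\mathcal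 N_\lambda)})$, and $\sigma(\mathcal N_\lambda):=\sigma(\mathcal N_\lambda^\circ)$, which consists of eigenvalues. *)

(* Defs.v *)
From mathcomp Require Import all_boot all_order all_algebra.
From mathcomp Require Import complex reals.
Import Order.TTheory GRing.Theory Num.Theory.
Set Implicit Arguments. Unset Strict Implicit. Unset Printing Implicit Defensive.
Local Open Scope ring_scope.
Local Open Scope complex_scope.

Section Defs.
Variable R : realType.
Local Notation C := R[i].

Section Space.
Variable X : lmodType C.
Variable ip : X -> X -> C.

Definition inner_product : Prop :=
  [/\ forall (c : C) (x y z : X), ip (c *: x + y) z = c * ip x z + ip y z,
      forall x y : X, ip y x = (ip x y)^*,
      forall x : X, 0 <= ip x x &
      forall x : X, ip x x = 0 -> x = 0].

Definition hnorm (x : X) : R := Num.sqrt (complex.Re (ip x x)).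

Definition converges_to (u : nat -> X) (l : X) : Prop :=
  forall e : R, 0 < e -> exists N, forall n, (N <= n)%N -> hnorm (u n - l) < e.

Definition cauchy_seq (u : nat -> X) : Prop :=
  forall e : R, 0 < e -> exists N, forall m n, (N <= m)%N -> (N <= n)%N ->
    hnorm (u m - u n) < e.

Definition complete : Prop :=
  forall u, cauchy_seq u -> exists l, converges_to u l.

Definition hilbert : Prop := inner_product /\ complete.

Definition in_closure (S : X -> Prop) (x : X) : Prop :=
  forall e : R, 0 < e -> exists y, S y /\ hnorm (x - y) < e.

(* eigenvalue of a (possibly multivalued) linear operator given by its graph *)
Definition op_eigenvalue (G : X -> X -> Prop) (s : C) : Prop :=
  exists x : X, x <> 0 /\ G x (s *: x).
End Space.

Definition lin_map (X Y : lmodType C) (f : X -> Y) : Prop :=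
  forall (c : C) (x y : X), f (c *: x + y) = c *: f x + f y.

Definition compact_op (X Y : lmodType C) (ipX : X -> X -> C) (ipY : Y -> Y -> C)
    (f : X -> Y) : Prop :=
  lin_map f /\
  forall u : nat -> X, (exists M : R, forall n, hnorm ipX (u n) <= M) ->
    exists phi : nat -> nat, (forall n, (phi n < phi n.+1)%N) /\
      exists l : Y, converges_to ipY (fun n => f (u (phi n))) l.

Section Forms.
Variables (V H K : lmodType C).
Variables (ipV : V -> V -> C) (ipH : H -> H -> C) (ipK : K -> K -> C).
Variables (i : V -> H) (j : V -> K).

Definition sesquilinear (a : V -> V -> C) : Prop :=
  (forall (c : C) (x y z : V), a (c *: x + y) z = c * a x z + a y z) /\
  (forall (c : C) (x y z : V), a z (c *: x + y) = c^* * a z x + a z y).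

Definition form_symmetric (a : V -> V -> C) : Prop :=
  forall u v, a v u = (a u v)^*.

Definition form_positive (a : V -> V -> C) : Prop :=
  forall u, 0 <= a u u.

Definition form_continuous (a : V -> V -> C) : Prop :=
  exists M : R, forall u v, `|a u v| <= (M * hnorm ipV u * hnorm ipV v)%:C.

Definition i_elliptic (a : V -> V -> C) : Prop :=
  exists omega delta : R, 0 < omega /\ 0 < delta /\
    forall u, (delta * hnorm ipV u ^+ 2)%:C
              <= a u u + (omega * hnorm ipH (i u) ^+ 2)%:C.

Definition Vbar (x : H) : Prop := in_closure ipH (fun y => exists v, y = i v) x.

(* graph of the operator B in Vbar associated with a form c on W = V:
   x in D(B), Bx = f  iff  x = u in V, f in Vbar, c(u,v) = (f,v)_H for all v *)
Definition assoc_op (c : V -> V -> C) (x f : H) : Prop :=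
  exists u : V, x = i u /\ Vbar f /\ forall v, c u v = ipH f (i v).

Definition form_mu (a : V -> V -> C) (mu : R) (u v : V) : C :=
  a u v - mu%:C * ipK (j u) (j v).

Definition form_b (a : V -> V -> C) (lam : R) (u v : V) : C :=
  a u v - lam%:C * ipH (i u) (i v).

Definition DtN_graph (a : V -> V -> C) (lam : R) (phi psi : K) : Prop :=
  exists u : V, j u = phi /\ forall v, form_b a lam u v = ipK psi (j v).

Definition DtN_dom (a : V -> V -> C) (lam : R) (phi : K) : Prop :=
  exists psi, DtN_graph a lam phi psi.

(* single-valued part N_lambda^o : graph N_lambda intersected with
   closure(D(N_lambda)) x closure(D(N_lambda)) *)
Definition DtN_op (a : V -> V -> C) (lam : R) (phi psi : K) : Prop :=
  DtN_graph a lam phi psi /\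
  in_closure ipK (DtN_dom a lam) phi /\ in_closure ipK (DtN_dom a lam) psi.

(* sigma(N_lambda) := sigma(N_lambda^o), which consists of eigenvalues *)
Definition DtN_spectrum (a : V -> V -> C) (lam mu : R) : Prop :=
  op_eigenvalue (DtN_op a lam) mu%:C.
End Forms.
End Defs.

(* Main.v *)
Require Import Defs.
From mathcomp Require Import all_boot all_order all_algebra.
From mathcomp Require Import complex reals.
From mathcomp Require Import ring.
Import Order.TTheory GRing.Theory Num.Theory.
Local Open Scope ring_scope.
Local Open Scope complex_scope.

Set Implicit Arguments. Unset Strict Implicit.
Section Helpers.
Variable R : realType.

Lemma dbl0 (Z : zmodType) (x : Z) : x = x + x -> x = 0.
Proof. by move=> h; apply: (addrI x); rewrite addr0 -h. Qed.

Lemma lin0 (X Y : lmodType R[i]) (f : X -> Y) : lin_map f -> f 0 = 0.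
Proof.
by move=> hf; apply: dbl0; have := hf 1 0 0; rewrite !scale1r addr0 => hh; exact: hh.
Qed.

Lemma linZ (X Y : lmodType R[i]) (f : X -> Y) c x : lin_map f -> f (c *: x) = c *: f x.
Proof. by move=> hf; have := hf c x 0; rewrite !addr0 (lin0 hf) addr0. Qed.

Lemma ip0l (X : lmodType R[i]) (ip : X -> X -> R[i]) :
  (forall (c : R[i]) (x y z : X), ip (c *: x + y) z = c * ip x z + ip y z) ->
  forall z, ip 0 z = 0.
Proof.
by move=> h z; apply: dbl0; have := h 1 0 0 z; rewrite scale1r addr0 mul1r => hh; exact: hh.
Qed.

Lemma ipZl (X : lmodType R[i]) (ip : X -> X -> R[i]) :
  (forall (c : R[i]) (x y z : X), ip (c *: x + y) z = c * ip x z + ip y z) ->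
  forall c x z, ip (c *: x) z = c * ip x z.
Proof. by move=> h c x z; have := h c x 0 z; rewrite addr0 (ip0l h) addr0. Qed.

Lemma closure_self (X : lmodType R[i]) (ip : X -> X -> R[i]) (S : X -> Prop) x :
  (forall (c : R[i]) (x y z : X), ip (c *: x + y) z = c * ip x z + ip y z) ->
  S x -> in_closure ip S x.
Proof.
move=> h Sx e e0; exists x; split => //.
by rewrite /hnorm subrr (ip0l h) /= sqrtr0.
Qed.
End Helpers.
Unset Implicit Arguments.

Theorem lemma2p5 (R : realType) (V H K : lmodType R[i])
    (ipV : V -> V -> R[i]) (ipH : H -> H -> R[i]) (ipK : K -> K -> R[i])
    (i : V -> H) (j : V -> K) (a : V -> V -> R[i]) :
  hilbert ipV -> hilbert ipH -> hilbert ipK ->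
  injective i -> compact_op ipV ipH i -> compact_op ipV ipK j ->
  sesquilinear a -> form_symmetric a -> form_positive a ->
  form_continuous ipV a -> i_elliptic ipV ipH i a ->
  (* A^N has no eigenvector in V_D = ker j *)
  (forall (s : R[i]) (u : V), u <> 0 -> j u = 0 ->
     ~ assoc_op ipH i a (i u) (s *: i u)) ->
  forall lam mu : R,
    op_eigenvalue (assoc_op ipH i (form_mu ipK j a mu)) lam%:C
    <-> DtN_spectrum ipH ipK i j a lam mu.
Proof.
move=> _ [[hH _ _ _] _] [[hK _ _ _] _] inj [li _] [lj _] [la _] _ _ _ _ noD lam mu.
have vb : forall u c, Vbar ipH i (c *: i u).
  move=> u c; apply: closure_self => //; exists (c *: u); by rewrite linZ.
split.
- move=> [x [xn0 [u [xu [_ hu]]]]]; subst x.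
  have un0 : u <> 0 by move=> u0; apply: xn0; rewrite u0 lin0.
  have jn0 : j u <> 0.
    move=> ju0; apply: (noD lam%:C u un0 ju0); exists u; split => //; split; first exact: vb.
    move=> v; have := hu v; rewrite /form_mu ju0 ip0l // mulr0 subr0 => ->.
    by rewrite ipZl.
  have hav : forall v, a u v = lam%:C * ipH (i u) (i v) + mu%:C * ipK (j u) (j v).
    move=> v; have := hu v; rewrite /form_mu ipZl // => e; rewrite -e; ring.
  exists (j u); split => //.
  have hg : DtN_graph ipH ipK i j a lam (j u) (mu%:C *: j u).
    exists u; split => // v; rewrite /form_b ipZl // (hav v); ring.
  split => //; split; apply: closure_self => //; first by exists (mu%:C *: j u).
  exists (mu%:C *: (mu%:C *: j u)), (mu%:C *: u); split; first by rewrite linZ.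
  move=> v.
  have a0 : a 0 v = 0 by apply: dbl0; have := la 1 0 0 v; rewrite scale1r addr0 mul1r => hh; exact: hh.
  have az : a (mu%:C *: u) v = mu%:C * a u v.
    by have := la mu%:C u 0 v; rewrite addr0 a0 addr0.
  rewrite /form_b (linZ mu%:C u li) (ipZl hH) (ipZl hK) (ipZl hK) az hav.
  by move: (mu%:C) (lam%:C) (ipH _ _) (ipK _ _) => m l x y; ring.
- move=> [phi [pn0 [[u [ju hu]] _]]]; subst phi.
  have un0 : u <> 0 by move=> u0; apply: pn0; rewrite u0 lin0.
  exists (i u); split.
    by move=> iu0; apply: un0; apply: inj; rewrite iu0 lin0.
  exists u; split => //; split; first exact: vb.
  move=> v; have := hu v; rewrite /form_mu /form_b !ipZl // => e.
  by apply/eqP; rewrite subr_eq addrC -subr_eq e.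
Qed.
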